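(* Let $X$ be a continuous vector field on $\mathbb{S}^1$ with support function $\phi_X$, and let $\eta\in\mathbb{D}^2$. Then $\mathcal{E}_X^-$ (resp. $\mathcal{E}_X^+$) is continuous at $\eta$ if and only if $\Sigma^-(\eta)$ (resp. $\Sigma^+(\eta)$) consists of a single point, i.e. there is a unique support plane of $\mathrm{epi}^+(\phi_X^-)$ at $(\eta,\phi_X^-(\eta))$ (resp. of $\mathrm{epi}^-(\phi_X^+)$ at $(\eta,\phi_X^+(\eta))$).
   Context: $\mathbb{R}^{1,2}$ is $\mathbb{R}^3$ with $\langle x,y\rangle=-x_0y_0+x_1y_1+x_2y_2$; $\Pi(x_0,x_1,x_2)=(x_1/x_0,x_2/x_0)$; $\mathbb{D}^2$ is the open unit disk with boundary $\mathbb{S}^1$. Minkowski cross product: $\langle x\boxtimes y,v\rangle=\det(x,y,v)$. A vector field $X$ on $\mathbb{S}^1$ is $X(z)=iz\phi_X(z)$. $\phi_X^-(\eta)=\sup\{a(\eta):a\text{ affine},a|_{\mathbb{S}^1}\le\phi_X\}$, $\phi_X^+(\eta)=\inf\{a(\eta):a\text{ affine},a|_{\mathbb{S}^1}\ge\phi_X\}$; $\mathrm{epi}^+(\phi_X^-)=\{(\eta,t):t\ge\phi_X^-(\eta)\}$, $\mathrm{epi}^-(\phi_X^+)=\{(\eta,t):t\le\phi_X^+(\eta)\}$. Support planes at points over $\mathbb{D}^2$ are the planes $t=\langle(1,\xi),\sigma\rangle$ with $\sigma\in\Sigma^\pm(\eta)$, where $\Sigma^-(\eta)$ is the set of $\sigma\in\mathbb{R}^{1,2}$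 with $\langle(1,\xi),\sigma\rangle\le\phi_X^-(\xi)$ for all $\xi\in\mathbb{D}^2$ and equality at $\xi=\eta$, and $\Sigma^+(\eta)$ likewise with $\ge\phi_X^+$; each is a point or a compact segment. $\mathcal{E}_X^\pm(\eta)=\mathrm{d}_{(1,\eta)}\Pi((1,\eta)\boxtimes\sigma^\pm(\eta))$ with $\sigma^\pm(\eta)$ the point or midpoint of $\Sigma^\pm(\eta)$. *)

(* Defs.v *)
From HB Require Import structures.
From mathcomp Require Import all_boot all_order all_algebra.
From mathcomp Require Import all_classical all_reals topology normedtype.
Set Implicit Arguments. Unset Strict Implicit. Unset Printing Implicit Defensive.
Import Order.TTheory GRing.Theory Num.Theory.
Import numFieldNormedType.Exports.
Local Open Scope ring_scope.
Local Open Scope classical_set_scope.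

Section Defs.
Variable R : realType.

(* points of R^2 and of R^{1,2} *)
Local Notation pt := (R * R)%type.
Local Notation v3 := (R * R * R)%type.

Definition disk : set pt := [set xi | xi.1 ^+ 2 + xi.2 ^+ 2 < 1].
Definition circle : set pt := [set z | z.1 ^+ 2 + z.2 ^+ 2 = 1].

Definition mink (x y : v3) : R :=
  - (x.1.1 * y.1.1) + x.1.2 * y.1.2 + x.2 * y.2.

Definition lift1 (xi : pt) : v3 := (1, xi.1, xi.2).

(* Minkowski cross product, characterized by <x [x] y, v> = det(x, y, v) *)
Definition mcross (x y : v3) : v3 :=
  (- (x.1.2 * y.2 - x.2 * y.1.2),
     x.2 * y.1.1 - x.1.1 * y.2,
     x.1.1 * y.1.2 - x.1.2 * y.1.1).

(* Pi (x0,x1,x2) = (x1/x0, x2/x0) and its differential at (1, eta) *)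
Definition Pi (x : v3) : pt := (x.1.2 / x.1.1, x.2 / x.1.1).
Definition dPi (eta : pt) (v : v3) : pt :=
  (v.1.2 - eta.1 * v.1.1, v.2 - eta.2 * v.1.1).

Definition affine : set (pt -> R) :=
  [set a | exists c b1 b2 : R, a = fun xi => c + b1 * xi.1 + b2 * xi.2].

Definition phi_minus (phi : pt -> R) (eta : pt) : R :=
  sup [set a eta | a in [set a | affine a /\ forall z, circle z -> a z <= phi z]].
Definition phi_plus (phi : pt -> R) (eta : pt) : R :=
  inf [set a eta | a in [set a | affine a /\ forall z, circle z -> phi z <= a z]].

Definition Sigma_minus (phi : pt -> R) (eta : pt) : set v3 :=
  [set s | (forall xi, disk xi -> mink (lift1 xi) s <= phi_minus phi xi)
           /\ mink (lift1 eta) s = phi_minus phi eta].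
Definition Sigma_plus (phi : pt -> R) (eta : pt) : set v3 :=
  [set s | (forall xi, disk xi -> phi_plus phi xi <= mink (lift1 xi) s)
           /\ mink (lift1 eta) s = phi_plus phi eta].

Definition v3comb (t : R) (a b : v3) : v3 :=
  ((1 - t) * a.1.1 + t * b.1.1, (1 - t) * a.1.2 + t * b.1.2,
   (1 - t) * a.2 + t * b.2).
Definition segment (a b : v3) : set v3 :=
  [set v3comb t a b | t in [set t : R | 0 <= t <= 1]].

(* the point, or midpoint of the segment, S (junk value if S is neither) *)
Definition midpt (S : set v3) : v3 :=
  let p := xget ((0, 0, 0) : v3 * v3)%R [set p : v3 * v3 | S = segment p.1 p.2] in
  v3comb (2^-1) p.1 p.2.

Definition sigma_minus (phi : pt -> R) (eta : pt) : v3 := midpt (Sigma_minus phi eta).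
Definition sigma_plus (phi : pt -> R) (eta : pt) : v3 := midpt (Sigma_plus phi eta).

Definition E_minus (phi : pt -> R) (eta : pt) : pt :=
  dPi eta (mcross (lift1 eta) (sigma_minus phi eta)).
Definition E_plus (phi : pt -> R) (eta : pt) : pt :=
  dPi eta (mcross (lift1 eta) (sigma_plus phi eta)).

(* vector field X on S^1 with support function phi: X(z) = i z phi(z) *)
Definition is_support_function (X : pt -> pt) (phi : pt -> R) : Prop :=
  forall z, circle z -> X z = (- z.2 * phi z, z.1 * phi z).

End Defs.

(* Main.v *)
Require Import Defs.
From HB Require Import structures.
From mathcomp Require Import all_boot all_order all_algebra.
From mathcomp Require Import all_classical all_reals topology normedtype.
From mathcomp Require Import ring lra.
Import Order.TTheory GRing.Theory Num.Theory.
Import numFieldNormedType.Exports.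
Set Implicit Arguments. Unset Strict Implicit. Unset Printing Implicit Defensive.
Local Open Scope ring_scope.
Local Open Scope classical_set_scope.

Definition lin {R : realType} (s : R * R * R) (x : R * R) : R :=
  - s.1.1 + x.1 * s.1.2 + x.2 * s.2.
Definition rho {R : realType} (x : R * R) : R := x.1 ^+ 2 + x.2 ^+ 2.
Definition Aset {R : realType} (g : R * R -> R) : set (R * R * R) :=
  [set s | forall z, circle z -> lin s z <= g z].
Definition Sfun {R : realType} (g : R * R -> R) (x : R * R) : set R :=
  [set lin s x | s in Aset g].
Definition gnorm {R : realType} (s : R * R * R) : R := Num.sqrt (s.1.2 ^+ 2 + s.2 ^+ 2).

Lemma minkE {R : realType} (s : R * R * R) x : mink (lift1 x) s = lin s x.
Proof. by rewrite /mink /lift1 /lin /= mul1r. Qed.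

Lemma phi_minusE {R : realType} (g : R * R -> R) x : phi_minus g x = sup (Sfun g x).
Proof.
rewrite /phi_minus /Sfun; congr sup; apply/seteqP; split.
- move=> _ [a [[c [b1 [b2 ->]]] Ha] <-]; exists (-c, b1, b2).
    move=> z cz; have := Ha z cz; rewrite /lin /=.
    by have -> : - - c + z.1 * b1 + z.2 * b2 = c + b1 * z.1 + b2 * z.2 by ring.
  by rewrite /lin /=; ring.
- move=> _ [s Hs <-]; exists (fun xi => -s.1.1 + s.1.2 * xi.1 + s.2 * xi.2).
    split; first by exists (-s.1.1), s.1.2, s.2.
    move=> z cz; have := Hs z cz; rewrite /lin /=.
    by have -> : - s.1.1 + z.1 * s.1.2 + z.2 * s.2 = - s.1.1 + s.1.2 * z.1 + s.2 * z.2 by ring.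
  by rewrite /lin /=; ring.
Qed.

Lemma gnorm_ge0 {R : realType} (s : R * R * R) : 0 <= gnorm s.
Proof. exact: sqrtr_ge0. Qed.

Lemma gnorm_sq {R : realType} (s : R * R * R) : gnorm s ^+ 2 = s.1.2 ^+ 2 + s.2 ^+ 2.
Proof. by rewrite /gnorm sqr_sqrtr // addr_ge0 // sqr_ge0. Qed.

Lemma Akey {R : realType} (g : R * R -> R) M s :
  (forall z, circle z -> `|g z| <= M) -> Aset g s ->
  - s.1.1 + gnorm s <= M /\ - s.1.1 - gnorm s <= M.
Proof.
move=> hM hs.
have gM z : circle z -> g z <= M.
  by move=> cz; apply: le_trans (hM z cz); exact: ler_norm.
have hN2 := gnorm_sq s; have hN0 := gnorm_ge0 s.
set N := gnorm s in hN2 hN0 *.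
have [N0|Npos] := eqVneq N 0.
  have e1 : s.1.2 = 0 by apply/eqP; rewrite -sqrf_eq0; apply/eqP; move: hN2; rewrite N0; nra.
  have e2 : s.2 = 0 by apply/eqP; rewrite -sqrf_eq0; apply/eqP; move: hN2; rewrite N0; nra.
  have c10 : circle ((1, 0) : R * R) by rewrite /circle /=; ring.
  have := hs _ c10; rewrite /lin /= e1 e2 N0 !mulr0 !addr0 subr0 => h.
  by split; apply: le_trans h (gM _ c10).
have Ngt : 0 < N by rewrite lt0r Npos.
have cz : circle ((s.1.2 / N, s.2 / N) : R * R).
  rewrite /circle /= !expr_div_n -mulrDl -hN2 divff //.
  by rewrite expf_neq0.
have cz' : circle ((- (s.1.2 / N), - (s.2 / N)) : R * R).
  by move: cz; rewrite /circle /= !sqrrN.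
have l1 : lin s (s.1.2 / N, s.2 / N) = - s.1.1 + N.
  rewrite /lin /=.
  have -> : - s.1.1 + s.1.2 / N * s.1.2 + s.2 / N * s.2 = - s.1.1 + N ^+ 2 / N by rewrite hN2; field.
  by rewrite expr2 mulfK.
have l2 : lin s (- (s.1.2 / N), - (s.2 / N)) = - s.1.1 - N.
  rewrite /lin /=.
  have -> : - s.1.1 + - (s.1.2 / N) * s.1.2 + - (s.2 / N) * s.2 = - s.1.1 - (N ^+ 2 / N) by rewrite hN2; field.
  by rewrite expr2 mulfK.
split.
- by rewrite -l1; apply: le_trans (hs _ cz) (gM _ cz).
- by rewrite -l2; apply: le_trans (hs _ cz') (gM _ cz').
Qed.

Lemma CSineq {R : realType} (x : R * R) (s : R * R * R) :
  (x.1 * s.1.2 + x.2 * s.2) ^+ 2 <= rho x * gnorm s ^+ 2.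
Proof. rewrite gnorm_sq /rho; have := sqr_ge0 (x.1 * s.2 - x.2 * s.1.2); nra. Qed.

Lemma dot_le {R : realType} (x : R * R) (s : R * R * R) :
  rho x <= 1 -> x.1 * s.1.2 + x.2 * s.2 <= gnorm s.
Proof.
move=> hx; have h := CSineq x s; have h0 := gnorm_ge0 s.
have hr : 0 <= rho x by rewrite /rho; nra.
set y := x.1 * s.1.2 + x.2 * s.2 in h *; set N := gnorm s in h h0 *.
have : y ^+ 2 <= N ^+ 2 by apply: le_trans h _; nra.
nra.
Qed.

Lemma Aset_le {R : realType} (g : R * R -> R) M s x :
  (forall z, circle z -> `|g z| <= M) -> Aset g s -> rho x <= 1 -> lin s x <= M.
Proof.
move=> hM hs hx; have [h1 _] := Akey hM hs; have := dot_le s hx.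
rewrite /lin; lra.
Qed.

Lemma Aset_M {R : realType} (g : R * R -> R) M :
  (forall z, circle z -> `|g z| <= M) -> Aset g (M, 0, 0).
Proof.
move=> hM z cz; have := hM z cz; rewrite ler_norml => /andP[h _].
by rewrite /lin /= !mulr0 !addr0.
Qed.

Lemma M_ge0 {R : realType} (g : R * R -> R) M :
  (forall z, circle z -> `|g z| <= M) -> 0 <= M.
Proof.
move=> hM; have c10 : circle ((1, 0) : R * R) by rewrite /circle /=; ring.
exact: le_trans (hM _ c10).
Qed.

Lemma Sfun_ub {R : realType} (g : R * R -> R) M x :
  (forall z, circle z -> `|g z| <= M) -> rho x <= 1 -> ubound (Sfun g x) M.
Proof. by move=> hM hx _ [s hs <-]; exact: Aset_le hM hs hx. Qed.

Lemma Sfun_has_sup {R : realType} (g : R * R -> R) M x :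
  (forall z, circle z -> `|g z| <= M) -> rho x <= 1 -> has_sup (Sfun g x).
Proof.
move=> hM hx; split; first by exists (lin (M, 0, 0) x); exists (M, 0, 0) => //; exact: Aset_M.
by exists M; exact: Sfun_ub.
Qed.

Lemma Aset_le_phi {R : realType} (g : R * R -> R) M s x :
  (forall z, circle z -> `|g z| <= M) -> Aset g s -> rho x <= 1 ->
  lin s x <= phi_minus g x.
Proof.
move=> hM hs hx; rewrite phi_minusE; apply: sup_upper_bound.
  exact: Sfun_has_sup hM hx.
by exists s.
Qed.

Lemma phi_ge {R : realType} (g : R * R -> R) M x :
  (forall z, circle z -> `|g z| <= M) -> rho x <= 1 -> - M <= phi_minus g x.
Proof.
move=> hM hx; have := Aset_le_phi hM (Aset_M hM) hx.
by rewrite /lin /= !mulr0 !addr0.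
Qed.

Lemma phi_le {R : realType} (g : R * R -> R) M x :
  (forall z, circle z -> `|g z| <= M) -> rho x <= 1 -> phi_minus g x <= M.
Proof.
move=> hM hx; rewrite phi_minusE; apply: ge_sup.
  by exists (lin (M, 0, 0) x); exists (M, 0, 0) => //; exact: Aset_M.
exact: Sfun_ub.
Qed.

Lemma grad_bound {R : realType} (g : R * R -> R) M M' s x :
  (forall z, circle z -> `|g z| <= M) -> Aset g s -> rho x < 1 ->
  - M' <= lin s x -> gnorm s * (1 - rho x) <= 2 * (M + M').
Proof.
move=> hM hs hx hl; have [h1 _] := Akey hM hs.
have hcs := CSineq x s; have h0 := gnorm_ge0 s.
have hr0 : 0 <= rho x by rewrite /rho; nra.
set r := Num.sqrt (rho x).
have r0 : 0 <= r := sqrtr_ge0 _.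
have r2 : r ^+ 2 = rho x by rewrite sqr_sqrtr.
have r1 : r < 1 by move: hx; rewrite -r2; nra.
move: hl; rewrite /lin => hl.
set y := x.1 * s.1.2 + x.2 * s.2 in hcs.
set N := gnorm s in hcs h0 h1 *.
have hy : y <= r * N.
  have : y ^+ 2 <= (r * N) ^+ 2 by rewrite exprMn r2.
  have : 0 <= r * N by apply: mulr_ge0.
  nra.
have hC : N * (1 - r) <= M + M' by rewrite /y in hy; lra.
rewrite -r2.
have : 0 <= N * (1 - r) by apply: mulr_ge0 => //; lra.
nra.
Qed.

Lemma comp_le_gnorm {R : realType} (s : R * R * R) :
  `|s.1.2| <= gnorm s /\ `|s.2| <= gnorm s.
Proof.
have h := gnorm_sq s; have h0 := gnorm_ge0 s.
set N := gnorm s in h h0 *.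
by split; rewrite ler_norml; apply/andP; split; nra.
Qed.

Lemma s11_bound {R : realType} (g : R * R -> R) M M' s x :
  (forall z, circle z -> `|g z| <= M) -> Aset g s -> rho x <= 1 ->
  0 <= M' -> - M' <= lin s x -> `|s.1.1| <= M + M' + gnorm s.
Proof.
move=> hM hs hx hM' hl; have [_ h2] := Akey hM hs; have := dot_le s hx.
have h0 := gnorm_ge0 s; have hM0 := M_ge0 hM.
move: hl; rewrite /lin => hl hd.
rewrite ler_norml; apply/andP; split; lra.
Qed.

Lemma lin_lin {R : realType} (s : R * R * R) (r : R) (z : R * R) :
  lin s (r * z.1, r * z.2) = r * lin s z + (1 - r) * lin s (0, 0).
Proof. rewrite /lin /=; ring. Qed.

Lemma phi_radial {R : realType} (g : R * R -> R) M z r :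
  (forall z, circle z -> `|g z| <= M) -> circle z -> 0 <= r <= 1 ->
  phi_minus g (r * z.1, r * z.2) <= r * g z + (1 - r) * M.
Proof.
move=> hM cz /andP[r0 r1]; rewrite phi_minusE; apply: ge_sup.
  by exists (lin (M, 0, 0) (r * z.1, r * z.2)); exists (M, 0, 0) => //; exact: Aset_M.
move=> _ [s hs <-]; rewrite lin_lin.
have h1 := hs z cz.
have h2 : lin s (0, 0) <= M by apply: (Aset_le hM hs); rewrite /rho /=; nra.
nra.
Qed.

Lemma disk_rho {R : realType} (x : R * R) : disk x -> rho x < 1.
Proof. by []. Qed.

Lemma Sigma_char {R : realType} (g : R * R -> R) M x s :
  (forall z, circle z -> `|g z| <= M) -> disk x ->
  (Sigma_minus g x s <-> Aset g s /\ lin s x = phi_minus g x).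
Proof.
move=> hM hx; rewrite /Sigma_minus /= !minkE; split.
- move=> [H ->]; split => // z cz.
  rewrite leNgt; apply/negP => hlt.
  set d := lin s z - g z.
  have d0 : 0 < d by rewrite /d subr_gt0.
  set K := `|M + s.1.1|.
  have K0 : 0 <= K := normr_ge0 _.
  set D := K + 1 + d.
  have D0 : 0 < D by rewrite /D; lra.
  set r := (K + 1) / D.
  have hr : r * D = K + 1 by rewrite /r mulfVK // gt_eqF.
  have r0 : 0 <= r by rewrite /r divr_ge0 //; lra.
  have r1 : r < 1 by rewrite /r ltr_pdivrMr //; rewrite /D; lra.
  have hd : disk ((r * z.1, r * z.2) : R * R).
    move: cz; rewrite /disk /circle /= => cz.
    have -> : (r * z.1) ^+ 2 + (r * z.2) ^+ 2 = r ^+ 2 * (z.1 ^+ 2 + z.2 ^+ 2) by ring.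
    rewrite cz mulr1; nra.
  have h1 := H _ hd; rewrite minkE in h1.
  have h2 := phi_radial hM cz (r:=r) (ltac:(apply/andP; split => //; lra)).
  have h3 := le_trans h1 h2.
  have e := lin_lin s r z.
  have e0 : lin s (0, 0) = - s.1.1 by rewrite /lin /= !mul0r !addr0.
  rewrite e e0 in h3.
  have hK : M + s.1.1 <= K := ler_norm _.
  have hp : 0 <= (1 - r) * (K - (M + s.1.1)) by apply: mulr_ge0; lra.
  rewrite /D /d in hr.
  rewrite /d in d0.
  nra.
- move=> [hs ->]; split => // xi hxi.
  by rewrite minkE; apply: (Aset_le_phi hM hs); apply: ltW.
Qed.

Lemma lin_cont {R : realType} (z : R * R) : continuous (fun s : R * R * R => lin s z).
Proof.
move=> s; rewrite /lin.
have h1 : (fun s : R * R * R => s.1.1) @ s --> s.1.1.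
  apply: (@cvg_comp _ _ _ fst fst _ _ _ cvg_fst cvg_fst).
have h2 : (fun s : R * R * R => s.1.2) @ s --> s.1.2.
  apply: (@cvg_comp _ _ _ fst snd _ _ _ cvg_fst cvg_snd).
have h3' : (fun s : R * R * R => s.2) @ s --> s.2 by apply: cvg_snd.
exact: (cvgD (cvgD (cvgN h1) (@cvgMl_tmp _ _ _ _ _ z.1 _ h2)) (@cvgMl_tmp _ _ _ _ _ z.2 _ h3')).
Qed.

Lemma closed_lin_le {R : realType} (z : R * R) (c : R) :
  closed [set s : R * R * R | lin s z <= c].
Proof.
apply: (@closed_comp _ _ (fun s => lin s z) [set y | y <= c]).
  by move=> s _; exact: lin_cont.
exact: closed_le.
Qed.

Lemma closed_lin_ge {R : realType} (z : R * R) (c : R) :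
  closed [set s : R * R * R | c <= lin s z].
Proof.
apply: (@closed_comp _ _ (fun s => lin s z) [set y | c <= y]).
  by move=> s _; exact: lin_cont.
exact: closed_ge.
Qed.

Lemma cluster_closed {T : topologicalType} (F : set_system T) (A : set T) p :
  cluster F p -> F A -> closed A -> A p.
Proof.
rewrite clusterE => hp FA cA.
by rewrite (closure_id A).1 //; exact: hp.
Qed.

Definition box {R : realType} (K : R) : set (R * R * R) :=
  [set s | `|s.1.1| <= K /\ `|s.1.2| <= K /\ `|s.2| <= K].

Lemma compact_box {R : realType} (K : R) : compact (box K).
Proof.
have -> : box K = (`[-K, K] `*` `[-K, K]) `*` `[-K, K].
  apply/seteqP; split => s /=.
    by rewrite /box /= !in_itv /= -!ler_norml => -[? [? ?]].
  by rewrite /box /= !in_itv /= -!ler_norml => -[[? ?] ?].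
apply: compact_setX; last exact: segment_compact.
by apply: compact_setX; exact: segment_compact.
Qed.

Lemma le_of_forall_eps {R : realType} (a b : R) :
  (forall e, 0 < e -> a - e <= b) -> a <= b.
Proof.
move=> H; rewrite leNgt; apply/negP => hlt.
have := H ((a - b) / 2) (ltac:(apply: divr_gt0; lra)); lra.
Qed.

Definition Kb {R : realType} (M M' rh : R) : R := M + M' + 2 * (M + M') / (1 - rh).

Lemma box_bound {R : realType} (g : R * R -> R) M M' s x rh :
  (forall z, circle z -> `|g z| <= M) -> Aset g s -> rho x <= rh -> rh < 1 ->
  0 <= M' -> - M' <= lin s x -> box (Kb M M' rh) s.
Proof.
move=> hM hs hx hrh hM' hl.
have hM0 := M_ge0 hM.
have hx1 : rho x < 1 by apply: le_lt_trans hx hrh.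
have gb := grad_bound hM hs hx1 hl.
have h0 := gnorm_ge0 s.
have hN : gnorm s <= 2 * (M + M') / (1 - rh).
  rewrite ler_pdivlMr; last by lra.
  apply: le_trans gb; apply: ler_wpM2l => //; lra.
have hpos : 0 <= 2 * (M + M') / (1 - rh) by apply: divr_ge0; lra.
have [c1 c2] := comp_le_gnorm s.
have c0 := s11_bound hM hs (ltW hx1) hM' hl.
rewrite /box /Kb; split; [|split]; lra.
Qed.

Lemma Sigma_nonempty {R : realType} (g : R * R -> R) M x :
  (forall z, circle z -> `|g z| <= M) -> disk x -> exists s, Sigma_minus g x s.
Proof.
move=> hM hx.
have hx1 : rho x < 1 := hx.
have hM0 := M_ge0 hM.
set t := phi_minus g x.
set B := fun e : R => [set s | Aset g s /\ t - e <= lin s x].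
set F := filter_from [set e : R | 0 < e] B.
have FF : Filter F.
  apply: filter_from_filter; first by exists 1 => /=.
  move=> i j /= i0 j0; exists (Num.min i j) => /=; first by rewrite lt_min i0 j0.
  move=> s [hs hl]; split; split => //; apply: le_trans hl.
    by rewrite lerD2l lerN2 ge_min lexx.
  by rewrite lerD2l lerN2 ge_min lexx orbT.
have PF : ProperFilter F.
  apply: filter_from_proper => e /= e0.
  have hsup := Sfun_has_sup hM (ltW hx1).
  have [_ [s hs <-] hlt] := sup_adherent e0 hsup.
  exists s; split => //; rewrite /t phi_minusE; exact: ltW.
have FB : F (box (Kb M (M + 1) (rho x))).
  exists 1 => //= s [hs hl]; apply: (box_bound hM hs (lexx _) hx1); first lra.
  have := phi_ge hM (ltW hx1); rewrite -/t; lra.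
have [p [_ hp]] := @compact_box R _ F PF FB.
have hpA : Aset g p.
  move=> z cz.
  have := cluster_closed (A := [set s | lin s z <= g z]) hp.
  apply; last exact: closed_lin_le.
  by exists 1 => //= s [hs _]; exact: hs.
exists p; apply/(Sigma_char _ hM hx); split => //.
apply/eqP; rewrite eq_le; apply/andP; split.
  exact: (Aset_le_phi hM hpA (ltW hx1)).
apply: le_of_forall_eps => e e0.
have := cluster_closed (A := [set s | t - e <= lin s x]) hp.
apply; last exact: closed_lin_ge.
by exists e => //= s [_ hl].
Qed.

Definition v3line {R : realType} (s d : R * R * R) (t : R) : R * R * R :=
  (s.1.1 + t * d.1.1, s.1.2 + t * d.1.2, s.2 + t * d.2).

Lemma lin_line {R : realType} (s d : R * R * R) t x :
  lin (v3line s d t) x = lin s x + t * lin d x.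
Proof. rewrite /lin /v3line /=; ring. Qed.

Lemma lin_comb {R : realType} (a b : R * R * R) u x :
  lin (v3comb u a b) x = (1 - u) * lin a x + u * lin b x.
Proof. rewrite /lin /v3comb /=; ring. Qed.

Lemma v3_eq {R : realType} (a b : R * R * R) :
  a.1.1 = b.1.1 -> a.1.2 = b.1.2 -> a.2 = b.2 -> a = b.
Proof. by case: a => [[a1 a2] a3]; case: b => [[b1 b2] b3] /= -> -> ->. Qed.

Lemma Sigma_comb {R : realType} (g : R * R -> R) M x a b u :
  (forall z, circle z -> `|g z| <= M) -> disk x ->
  Sigma_minus g x a -> Sigma_minus g x b -> 0 <= u <= 1 ->
  Sigma_minus g x (v3comb u a b).
Proof.
move=> hM hx /(Sigma_char _ hM hx) [ha ea] /(Sigma_char _ hM hx) [hb eb] /andP[u0 u1].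
apply/(Sigma_char _ hM hx); split.
  move=> z cz; rewrite lin_comb; have := ha z cz; have := hb z cz; nra.
rewrite lin_comb ea eb; ring.
Qed.

Lemma three_dirs {R : realType} (al be de : R) :
  - (al + be) / 3 < de -> (2 * al - be) / 3 < de -> (2 * be - al) / 3 < de ->
  al ^+ 2 <= 36 * de ^+ 2 /\ be ^+ 2 <= 36 * de ^+ 2.
Proof.
move=> h1 h2 h3.
have a1 : al < 6 * de by lra.
have a2 : - 6 * de < al by lra.
have b1 : be < 6 * de by lra.
have b2 : - 6 * de < be by lra.
split; nra.
Qed.

Lemma cramer_ineq {R : realType} (d1 d2 e1 e2 v1 v2 : R) :
  (d1 * e2 - d2 * e1) ^+ 2 * (v1 ^+ 2 + v2 ^+ 2) <=
  4 * ((d1 * v1 + d2 * v2) ^+ 2 + (e1 * v1 + e2 * v2) ^+ 2) *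
    (d1 ^+ 2 + d2 ^+ 2 + e1 ^+ 2 + e2 ^+ 2).
Proof.
set al := d1 * v1 + d2 * v2; set be := e1 * v1 + e2 * v2.
set D := d1 * e2 - d2 * e1.
have i1 : D * v1 = al * e2 - be * d2 by rewrite /D /al /be; ring.
have i2 : D * v2 = be * d1 - al * e1 by rewrite /D /al /be; ring.
have j1 : (D * v1) ^+ 2 <= 2 * (al ^+ 2 * e2 ^+ 2 + be ^+ 2 * d2 ^+ 2).
  rewrite i1; have := sqr_ge0 (al * e2 + be * d2); nra.
have j2 : (D * v2) ^+ 2 <= 2 * (be ^+ 2 * d1 ^+ 2 + al ^+ 2 * e1 ^+ 2).
  rewrite i2; have := sqr_ge0 (be * d1 + al * e1); nra.
have k : 0 <= al ^+ 2 /\ 0 <= be ^+ 2 /\ 0 <= d1 ^+ 2 /\ 0 <= d2 ^+ 2 /\ 0 <= e1 ^+ 2 /\ 0 <= e2 ^+ 2.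
  by split; [|split; [|split; [|split; [|split]]]]; exact: sqr_ge0.
move: j1 j2; rewrite !exprMn; nra.
Qed.

Lemma collinear3 {R : realType} (g : R * R -> R) M x s1 s2 s3 :
  (forall z, circle z -> `|g z| <= M) -> disk x ->
  Sigma_minus g x s1 -> Sigma_minus g x s2 -> Sigma_minus g x s3 ->
  (s2.1.2 - s1.1.2) * (s3.2 - s1.2) - (s2.2 - s1.2) * (s3.1.2 - s1.1.2) = 0.
Proof.
move=> hM hx /(Sigma_char _ hM hx) [h1 e1] /(Sigma_char _ hM hx) [h2 e2]
  /(Sigma_char _ hM hx) [h3 e3].
set ph := phi_minus g x in e1 e2 e3.
apply/eqP; apply: contraT => /negP/negP hD.
set d1 := s2.1.2 - s1.1.2 in hD; set d2 := s2.2 - s1.2 in hD.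
set f1 := s3.1.2 - s1.1.2 in hD; set f2 := s3.2 - s1.2 in hD.
set Dn := d1 * f2 - d2 * f1 in hD.
set S := d1 ^+ 2 + d2 ^+ 2 + f1 ^+ 2 + f2 ^+ 2.
have S0 : 0 <= S by rewrite /S; nra.
have hx1 : rho x < 1 := hx.
have hr0 : 0 <= rho x by rewrite /rho; nra.
set r := Num.sqrt (rho x).
have r0 : 0 <= r := sqrtr_ge0 _.
have r2 : r ^+ 2 = rho x by rewrite sqr_sqrtr.
have r1 : r < 1 by move: hx1; rewrite -r2; nra.
have Dpos : 0 < `|Dn| by rewrite normr_gt0.
set de := `|Dn| * (1 - r) / (20 * (S + 1)).
have de0 : 0 < de by rewrite /de; apply: divr_gt0; [apply: mulr_gt0 => //; lra | lra].
have hde : de * (20 * (S + 1)) = `|Dn| * (1 - r) by rewrite /de mulfVK //; apply: lt0r_neq0; lra.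
set a := ((s1.1.1 + s2.1.1 + s3.1.1) / 3 - de, (s1.1.2 + s2.1.2 + s3.1.2) / 3,
          (s1.2 + s2.2 + s3.2) / 3).
have la : forall y, lin a y = (lin s1 y + lin s2 y + lin s3 y) / 3 + de.
  by move=> y; rewrite /a /lin /=; field.
suff hA : Aset g a.
  have := Aset_le_phi hM hA (ltW hx1); rewrite la e1 e2 e3 -/ph; lra.
move=> z cz.
set v1 := z.1 - x.1; set v2 := z.2 - x.2.
have lz : forall s : R * R * R, lin s z = lin s x + (s.1.2 * v1 + s.2 * v2).
  by move=> s; rewrite /lin /v1 /v2; ring.
set al := d1 * v1 + d2 * v2; set be := f1 * v1 + f2 * v2.
have q1 : lin s1 z - (lin a z - de) = - (al + be) / 3.
  by rewrite la !lz e1 e2 e3 /al /be /d1 /d2 /f1 /f2; field.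
have q2 : lin s2 z - (lin a z - de) = (2 * al - be) / 3.
  by rewrite la !lz e1 e2 e3 /al /be /d1 /d2 /f1 /f2; field.
have q3 : lin s3 z - (lin a z - de) = (2 * be - al) / 3.
  by rewrite la !lz e1 e2 e3 /al /be /d1 /d2 /f1 /f2; field.
have [k1|k1] := leP de (- (al + be) / 3).
  have := h1 z cz; lra.
have [k2|k2] := leP de ((2 * al - be) / 3).
  have := h2 z cz; lra.
have [k3|k3] := leP de ((2 * be - al) / 3).
  have := h3 z cz; lra.
exfalso.
have [ha hb] := three_dirs k1 k2 k3.
have hc := cramer_ineq d1 d2 f1 f2 v1 v2.
rewrite -/al -/be -/Dn -/S in hc.
have hv : (1 - r) ^+ 2 <= v1 ^+ 2 + v2 ^+ 2.
  move: cz; rewrite /circle => cz.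
  have hzx : (z.1 * x.1 + z.2 * x.2) ^+ 2 <= r ^+ 2.
    have id : (z.1 * x.1 + z.2 * x.2) ^+ 2 + (z.1 * x.2 - z.2 * x.1) ^+ 2 =
      (z.1 ^+ 2 + z.2 ^+ 2) * (x.1 ^+ 2 + x.2 ^+ 2) by ring.
    rewrite cz mul1r in id.
    rewrite r2 /rho; have := sqr_ge0 (z.1 * x.2 - z.2 * x.1); lra.
  have hzx' : z.1 * x.1 + z.2 * x.2 <= r by nra.
  have -> : v1 ^+ 2 + v2 ^+ 2 = z.1 ^+ 2 + z.2 ^+ 2 - 2 * (z.1 * x.1 + z.2 * x.2) + rho x.
    by rewrite /v1 /v2 /rho; ring.
  rewrite cz -r2; nra.
set P := Dn ^+ 2 * (1 - r) ^+ 2.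
have P0 : 0 < P.
  rewrite /P; apply: mulr_gt0; first by rewrite -real_normK ?num_real // exprn_gt0.
  by apply: exprn_gt0; lra.
have hP : P = de ^+ 2 * (400 * (S + 1) ^+ 2).
  rewrite /P -real_normK ?num_real // -exprMn -hde; ring.
have c1 : P <= Dn ^+ 2 * (v1 ^+ 2 + v2 ^+ 2).
  by rewrite /P; apply: ler_wpM2l => //; exact: sqr_ge0.
have c2 : Dn ^+ 2 * (v1 ^+ 2 + v2 ^+ 2) <= 288 * de ^+ 2 * S.
  apply: le_trans hc _.
  have : al ^+ 2 + be ^+ 2 <= 72 * de ^+ 2 by lra.
  nra.
have c3 : P <= 288 * de ^+ 2 * S := le_trans c1 c2.
have de2 : 0 < de ^+ 2 by apply: exprn_gt0.
rewrite hP in c3.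
nra.
Qed.

Lemma segment_same {R : realType} (p : R * R * R) : segment p p = [set p].
Proof.
have e : forall t, v3comb t p p = p.
  by move=> t; apply: v3_eq; rewrite /v3comb /=; ring.
apply/seteqP; split.
  by move=> _ [t _ <-]; rewrite e.
move=> _ ->; exists 0; last exact: e.
by rewrite /= lexx ler01.
Qed.

Lemma mul_le_abs {R : realType} (d y K : R) : `|y| <= K -> d * y <= `|d| * K.
Proof.
move=> hy; apply: (le_trans (ler_norm (d * y))).
by rewrite normrM; apply: ler_wpM2l.
Qed.

Lemma line_bound {R : realType} (g : R * R -> R) M x s1 d :
  (forall z, circle z -> `|g z| <= M) -> disk x ->
  Sigma_minus g x s1 -> lin d x = 0 -> 0 < d.1.2 ^+ 2 + d.2 ^+ 2 ->
  exists B, forall t, Aset g (v3line s1 d t) -> t <= B.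
Proof.
move=> hM hx /(Sigma_char _ hM hx) [h1 e1] hd hq.
have hx1 : rho x < 1 := hx.
set K := Kb M M (rho x).
set q := d.1.2 ^+ 2 + d.2 ^+ 2 in hq.
exists ((`|d.1.2| * K + `|d.2| * K + `|d.1.2| * `|s1.1.2| + `|d.2| * `|s1.2|) / q).
move=> t ht.
have hl : - M <= lin (v3line s1 d t) x.
  by rewrite lin_line hd mulr0 addr0 e1; exact: phi_ge hM (ltW hx1).
have [_ [b1 b2]] := box_bound hM ht (lexx _) hx1 (M_ge0 hM) hl.
rewrite /v3line /= -/K in b1 b2.
have k1 := mul_le_abs d.1.2 b1; have k2 := mul_le_abs d.2 b2.
have k3 : - (d.1.2 * s1.1.2) <= `|d.1.2| * `|s1.1.2|.
  rewrite -normrM -normrN; exact: ler_norm.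
have k4 : - (d.2 * s1.2) <= `|d.2| * `|s1.2|.
  rewrite -normrM -normrN; exact: ler_norm.
rewrite ler_pdivlMr //.
have -> : t * q = d.1.2 * (s1.1.2 + t * d.1.2) + d.2 * (s1.2 + t * d.2)
   - (d.1.2 * s1.1.2) - (d.2 * s1.2) by rewrite /q; ring.
lra.
Qed.

Lemma sup_in {R : realType} (g : R * R -> R) s1 d B :
  Aset g s1 -> (forall t, Aset g (v3line s1 d t) -> t <= B) ->
  Aset g (v3line s1 d (sup [set t | Aset g (v3line s1 d t)])) /\
  0 <= sup [set t | Aset g (v3line s1 d t)].
Proof.
move=> h1 hB.
set T := [set t | Aset g (v3line s1 d t)].
have T0 : T 0 by move=> z cz; rewrite lin_line mul0r addr0; exact: h1.
have hs : has_sup T by split; [exists 0 | exists B => t; exact: hB].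
have s0 : 0 <= sup T by exact: sup_upper_bound.
split => // z cz; rewrite lin_line.
have [hp|hn] := ltP 0 (lin d z).
  have : sup T <= (g z - lin s1 z) / lin d z.
    apply: ge_sup; first by exists 0.
    move=> t ht; have := ht z cz; rewrite lin_line => h.
    by rewrite ler_pdivlMr //; lra.
  by rewrite ler_pdivlMr // => h; lra.
have := h1 z cz; have : sup T * lin d z <= 0 by nra.
lra.
Qed.

Lemma comb_scalar {R : realType} (a b t1 t2 t : R) : 0 < t1 + t2 ->
  (1 - (t1 - t) / (t1 + t2)) * (a + t1 * b) + (t1 - t) / (t1 + t2) * (a + t2 * - b) = a + t * b.
Proof. move=> h; field; lra. Qed.

Lemma Sigma_segment {R : realType} (g : R * R -> R) M x :
  (forall z, circle z -> `|g z| <= M) -> disk x ->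
  exists p q, Sigma_minus g x = segment p q.
Proof.
move=> hM hx.
have [s1 hs1] := Sigma_nonempty hM hx.
have [[s2 [hs2 ne]]|none] := pselect (exists s2, Sigma_minus g x s2 /\ s2 <> s1); last first.
  exists s1, s1; rewrite segment_same; apply/seteqP; split; last by move=> _ ->.
  move=> s hs; apply: contrapT => ne; apply: none; exists s; split => //.
have [hA1 e1] := (Sigma_char _ hM hx).1 hs1.
have [hA2 e2] := (Sigma_char _ hM hx).1 hs2.
set d : R * R * R := (s2.1.1 - s1.1.1, s2.1.2 - s1.1.2, s2.2 - s1.2).
have hd : lin d x = 0.
  have -> : lin d x = lin s2 x - lin s1 x by rewrite /lin /d /=; ring.
  by rewrite e1 e2 subrr.
set q := d.1.2 ^+ 2 + d.2 ^+ 2.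
have hq : 0 < q.
  rewrite lt_neqAle; apply/andP; split; last by rewrite /q; nra.
  apply/negP => /eqP q0; apply: ne.
  have a1 : d.1.2 = 0 by move: q0; rewrite /q; nra.
  have a2 : d.2 = 0 by move: q0; rewrite /q; nra.
  move: hd; rewrite /lin a1 a2 !mulr0 !addr0 => /eqP; rewrite oppr_eq0 => /eqP a0.
  move: a0 a1 a2; rewrite /d /= => a0 a1 a2.
  by apply: v3_eq; apply/eqP; rewrite -subr_eq0; apply/eqP.
set nd : R * R * R := (- d.1.1, - d.1.2, - d.2).
have hnd : lin nd x = 0 by move: hd; rewrite /lin /nd /=; lra.
have hnq : 0 < nd.1.2 ^+ 2 + nd.2 ^+ 2 by rewrite /nd /= !sqrrN.
have lnd : forall t, v3line s1 nd t = v3line s1 d (- t).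
  by move=> t; apply: v3_eq; rewrite /v3line /nd /=; ring.
have [B1 hB1] := line_bound hM hx hs1 hd hq.
have [B2 hB2] := line_bound hM hx hs1 hnd hnq.
have [hP t10] := sup_in hA1 hB1.
have [hQ t20] := sup_in hA1 hB2.
set t1 := sup [set t | Aset g (v3line s1 d t)] in hP t10.
set t2 := sup [set t | Aset g (v3line s1 nd t)] in hQ t20.
have hT1 : forall t, Aset g (v3line s1 d t) -> t <= t1.
  move=> t ht; apply: sup_upper_bound => //.
  split; [by exists t | by exists B1].
have hT2 : forall t, Aset g (v3line s1 nd t) -> t <= t2.
  move=> t ht; apply: sup_upper_bound => //.
  split; [by exists t | by exists B2].
have l1 : v3line s1 d 1 = s2 by apply: v3_eq; rewrite /v3line /d /=; ring.
have t11 : 1 <= t1 by apply: hT1; rewrite l1.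
set P := v3line s1 d t1; set Q := v3line s1 nd t2.
have SP : Sigma_minus g x P.
  by apply/(Sigma_char _ hM hx); split => //; rewrite /P lin_line hd mulr0 addr0.
have SQ : Sigma_minus g x Q.
  by apply/(Sigma_char _ hM hx); split => //; rewrite /Q lin_line hnd mulr0 addr0.
exists P, Q; apply/seteqP; split; last first.
  by move=> _ [u /andP[u0 u1] <-]; apply: (Sigma_comb hM hx SP SQ); rewrite u0 u1.
move=> s hs.
have hdet := collinear3 hM hx hs1 hs2 hs.
have [hA e] := (Sigma_char _ hM hx).1 hs.
set t := (d.1.2 * (s.1.2 - s1.1.2) + d.2 * (s.2 - s1.2)) / q.
have et1 : s.1.2 = s1.1.2 + t * d.1.2.
  have : (s.1.2 - s1.1.2) * q = (d.1.2 * (s.1.2 - s1.1.2) + d.2 * (s.2 - s1.2)) * d.1.2.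
    have : (s.1.2 - s1.1.2) * q - (d.1.2 * (s.1.2 - s1.1.2) + d.2 * (s.2 - s1.2)) * d.1.2
      = - d.2 * ((s2.1.2 - s1.1.2) * (s.2 - s1.2) - (s2.2 - s1.2) * (s.1.2 - s1.1.2)).
      by rewrite /q /d /=; ring.
    by rewrite hdet mulr0 => /eqP; rewrite subr_eq0 => /eqP.
  rewrite /t => h; rewrite mulrAC -h mulfK ?gt_eqF //; ring.
have et2 : s.2 = s1.2 + t * d.2.
  have : (s.2 - s1.2) * q = (d.1.2 * (s.1.2 - s1.1.2) + d.2 * (s.2 - s1.2)) * d.2.
    have : (s.2 - s1.2) * q - (d.1.2 * (s.1.2 - s1.1.2) + d.2 * (s.2 - s1.2)) * d.2
      = d.1.2 * ((s2.1.2 - s1.1.2) * (s.2 - s1.2) - (s2.2 - s1.2) * (s.1.2 - s1.1.2)).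
      by rewrite /q /d /=; ring.
    by rewrite hdet mulr0 => /eqP; rewrite subr_eq0 => /eqP.
  rewrite /t => h; rewrite mulrAC -h mulfK ?gt_eqF //; ring.
have et0 : s.1.1 = s1.1.1 + t * d.1.1.
  have h0 : d.1.1 = x.1 * d.1.2 + x.2 * d.2 by move: hd; rewrite /lin; lra.
  have : lin s x = lin s1 x by rewrite e e1.
  rewrite /lin et1 et2 h0 => h; lra.
have sl : s = v3line s1 d t by apply: v3_eq.
have tle1 : t <= t1 by apply: hT1; rewrite -sl.
have tle2 : - t <= t2 by apply: hT2; rewrite lnd opprK -sl.
have t12 : 0 < t1 + t2 by lra.
rewrite /segment; apply: (@ex_intro2 R _ _ ((t1 - t) / (t1 + t2))).
  apply/andP; split; first by apply: divr_ge0; lra.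
  by rewrite ler_pdivrMr //; lra.
clearbody t; apply: v3_eq; rewrite /v3comb /P /Q /v3line /nd /d /= ?et0 ?et1 ?et2; exact: comb_scalar.
Qed.

Lemma midpt_in {R : realType} (S : set (R * R * R)) :
  (exists p q, S = segment p q) -> S (midpt S).
Proof.
move=> [p [q hS]]; rewrite /midpt /=.
set X := xget _ _.
have hX : S = segment X.1 X.2.
  by apply: (@xgetPex _ _ [set p : (R * R * R) * (R * R * R) | S = segment p.1 p.2]); exists (p, q).
rewrite {1}hX; exists (2^-1) => //; apply/andP; split; first by rewrite invr_ge0.
by rewrite invf_le1 // ler1n.
Qed.

Lemma midpt_single {R : realType} (s : R * R * R) : midpt [set s] = s.
Proof.
rewrite /midpt /=.
set X := xget _ _.
have hS : [set s] = segment X.1 X.2.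
  apply: (@xgetPex _ _ [set p : (R * R * R) * (R * R * R) | [set s] = segment p.1 p.2]).
  by exists (s, s); rewrite /= segment_same.
have hp : [set s] X.1.
  by rewrite hS; exists 0; [rewrite /= lexx ler01 | apply: v3_eq; rewrite /v3comb /=; ring].
have hq : [set s] X.2.
  by rewrite hS; exists 1; [rewrite /= lexx ler01 | apply: v3_eq; rewrite /v3comb /=; ring].
by rewrite hp hq; apply: v3_eq; rewrite /v3comb /=; field.
Qed.


Lemma p11_cont {R : realType} : continuous (fun s : R * R * R => s.1.1).
Proof. move=> s; exact: (@cvg_comp _ _ _ fst fst _ _ _ cvg_fst cvg_fst). Qed.
Lemma p12_cont {R : realType} : continuous (fun s : R * R * R => s.1.2).
Proof. move=> s; exact: (@cvg_comp _ _ _ fst snd _ _ _ cvg_fst cvg_snd). Qed.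
Lemma p2_cont {R : realType} : continuous (fun s : R * R * R => s.2).
Proof. by move=> s; apply: cvg_snd. Qed.
Lemma q1_cont {R : realType} : continuous (fun x : R * R => x.1).
Proof. by move=> x; apply: cvg_fst. Qed.
Lemma q2_cont {R : realType} : continuous (fun x : R * R => x.2).
Proof. by move=> x; apply: cvg_snd. Qed.

Lemma cvg_p11 {R : realType} {T : Type} (F : set_system T) {FF : Filter F}
  (f : T -> R * R * R) (s0 : R * R * R) : f @ F --> s0 -> (fun x => (f x).1.1) @ F --> s0.1.1.
Proof. by move=> h; have := cvg_comp f _ h (@p11_cont _ s0). Qed.
Lemma cvg_p12 {R : realType} {T : Type} (F : set_system T) {FF : Filter F}
  (f : T -> R * R * R) (s0 : R * R * R) : f @ F --> s0 -> (fun x => (f x).1.2) @ F --> s0.1.2.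
Proof. by move=> h; have := cvg_comp f _ h (@p12_cont _ s0). Qed.
Lemma cvg_p2 {R : realType} {T : Type} (F : set_system T) {FF : Filter F}
  (f : T -> R * R * R) (s0 : R * R * R) : f @ F --> s0 -> (fun x => (f x).2) @ F --> s0.2.
Proof. by move=> h; have := cvg_comp f _ h (@p2_cont _ s0). Qed.
Lemma cvg_q1 {R : realType} {T : Type} (F : set_system T) {FF : Filter F}
  (f : T -> R * R) (x0 : R * R) : f @ F --> x0 -> (fun x => (f x).1) @ F --> x0.1.
Proof. by move=> h; have := cvg_comp f _ h (@q1_cont _ x0). Qed.
Lemma cvg_q2 {R : realType} {T : Type} (F : set_system T) {FF : Filter F}
  (f : T -> R * R) (x0 : R * R) : f @ F --> x0 -> (fun x => (f x).2) @ F --> x0.2.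
Proof. by move=> h; have := cvg_comp f _ h (@q2_cont _ x0). Qed.

Definition E1p {R : realType} (a b c d e : R) : R :=
  (b * c - 1 * e) - a * (- (a * e - b * d)).
Definition E2p {R : realType} (a b c d e : R) : R :=
  (1 * d - a * c) - b * (- (a * e - b * d)).

Lemma EpE {R : realType} (x : R * R) (s : R * R * R) :
  dPi x (mcross (lift1 x) s) = (E1p x.1 x.2 s.1.1 s.1.2 s.2, E2p x.1 x.2 s.1.1 s.1.2 s.2).
Proof. by rewrite /dPi /mcross /lift1 /E1p /E2p. Qed.

Lemma cvg_Ep {R : realType} {T : Type} (F : set_system T) {FF : Filter F}
  (fa fb fc fd fe : T -> R) a b c d e :
  fa @ F --> a -> fb @ F --> b -> fc @ F --> c -> fd @ F --> d -> fe @ F --> e ->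
  (fun t => E1p (fa t) (fb t) (fc t) (fd t) (fe t)) @ F --> E1p a b c d e /\
  (fun t => E2p (fa t) (fb t) (fc t) (fd t) (fe t)) @ F --> E2p a b c d e.
Proof.
move=> ha hb hc hd he; rewrite /E1p /E2p; split.
- by have := (cvgB (cvgB (cvgM hb hc) (@cvgMl_tmp _ _ _ _ _ 1 _ he))
     (cvgM ha (cvgN (cvgB (cvgM ha he) (cvgM hb hd))))); apply.
- by have := (cvgB (cvgB (@cvgMl_tmp _ _ _ _ _ 1 _ hd) (cvgM ha hc))
     (cvgM hb (cvgN (cvgB (cvgM ha he) (cvgM hb hd))))); apply.
Qed.

Lemma Q_identity {R : realType} (x : R * R) (s : R * R * R) (n1 n2 : R) :
  n1 * (dPi x (mcross (lift1 x) s)).2 - n2 * (dPi x (mcross (lift1 x) s)).1 =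
  (1 - rho x) * (n1 * s.1.2 + n2 * s.2) + lin s x * (n1 * x.1 + n2 * x.2).
Proof. rewrite /dPi /mcross /lift1 /rho /lin /=; ring. Qed.

Lemma rho_cont {R : realType} : continuous (@rho R).
Proof.
move=> x; rewrite /rho.
have h1 : (fun y : R * R => y.1) @ x --> x.1 by exact: q1_cont.
have h2 : (fun y : R * R => y.2) @ x --> x.2 by exact: q2_cont.
have e : forall y : R * R, y.1 ^+ 2 + y.2 ^+ 2 = y.1 * y.1 + y.2 * y.2 by move=> y; rewrite !expr2.
rewrite (funext e) /continuous_at /=.
by have := (cvgD (cvgM h1 h1) (cvgM h2 h2)); apply.
Qed.

Lemma sig_in {R : realType} (g : R * R -> R) M x :
  (forall z, circle z -> `|g z| <= M) -> disk x -> Sigma_minus g x (sigma_minus g x).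
Proof. by move=> hM hx; rewrite /sigma_minus; apply: midpt_in; exact: Sigma_segment hM hx. Qed.

Lemma dist_cvg0 {R : realType} (eta : R * R) (K : R) :
  (fun xi : R * R => 2 * K * (`|xi.1 - eta.1| + `|xi.2 - eta.2|)) @ eta -->
  2 * K * (`|eta.1 - eta.1| + `|eta.2 - eta.2|).
Proof.
have h1 : (fun xi : R * R => xi.1) @ eta --> eta.1 by exact: q1_cont.
have h2 : (fun xi : R * R => xi.2) @ eta --> eta.2 by exact: q2_cont.
have c1 : (fun _ : R * R => eta.1) @ eta --> eta.1 by apply: cvg_cst.
have c2 : (fun _ : R * R => eta.2) @ eta --> eta.2 by apply: cvg_cst.
by have := @cvgMl_tmp _ _ _ _ _ (2 * K) _ (cvgD (cvg_norm (cvgB h1 c1)) (cvg_norm (cvgB h2 c2))); apply.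
Qed.

Lemma cont_of_single {R : realType} (g : R * R -> R) M eta s0 :
  (forall z, circle z -> `|g z| <= M) -> disk eta ->
  Sigma_minus g eta = [set s0] -> {for eta, continuous (E_minus g)}.
Proof.
move=> hM heta hS.
have hx1 : rho eta < 1 := heta.
set r1 := (1 + rho eta) / 2.
have hr1 : r1 < 1 by rewrite /r1; lra.
have hr0 : rho eta < r1 by rewrite /r1; lra.
have N1 : \forall xi \near eta, rho xi < r1.
  by apply: (cvgr_lt (rho eta) (@rho_cont R eta) r1 hr0).
set sg := sigma_minus g.
have N2 : \forall xi \near eta, Sigma_minus g xi (sg xi) /\ rho xi < r1.
  apply: filterS N1 => xi h; split => //; apply: (sig_in hM).
  exact: lt_trans h hr1.
set K := Kb M M r1.
have hs0 : Sigma_minus g eta s0 by rewrite hS.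
have [hA0 e0] := (Sigma_char _ hM heta).1 hs0.
have hM0 := M_ge0 hM.
have B0 : box K s0.
  apply: (box_bound hM hA0 (ltW hr0) hr1 hM0); rewrite e0; exact: phi_ge hM (ltW hx1).
have bnd : forall xi, Sigma_minus g xi (sg xi) /\ rho xi < r1 -> box K (sg xi).
  move=> xi [hs hr]; have hxi : disk xi := lt_trans hr hr1.
  have [hA e] := (Sigma_char _ hM hxi).1 hs.
  apply: (box_bound hM hA (ltW hr) hr1 hM0); rewrite e; apply: phi_ge hM _.
  by apply: ltW; exact: lt_trans hr hr1.
have FB : (sg @ eta) (box K) by apply: filterS N2; exact: bnd.
have clu : forall p, cluster (sg @ eta) p -> p = s0.
  move=> p hp.
  have hpA : Aset g p.
    move=> z cz.
    have := cluster_closed (A := [set s | lin s z <= g z]) hp.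
    apply; last exact: closed_lin_le.
    apply: filterS N2 => xi [hs hr]; have hxi : disk xi := lt_trans hr hr1.
    by have [hA _] := (Sigma_char _ hM hxi).1 hs; exact: hA.
  have : Sigma_minus g eta p.
    apply/(Sigma_char _ hM heta); split => //.
    apply/eqP; rewrite eq_le; apply/andP; split; first exact: (Aset_le_phi hM hpA (ltW hx1)).
    apply: le_of_forall_eps => e e00.
    have := cluster_closed (A := [set s | phi_minus g eta - e <= lin s eta]) hp.
    apply; last exact: closed_lin_ge.
    have hlim : 2 * K * (`|eta.1 - eta.1| + `|eta.2 - eta.2|) < e.
      by rewrite !subrr normr0 addr0 mulr0.
    have N3 : \forall xi \near eta, 2 * K * (`|xi.1 - eta.1| + `|xi.2 - eta.2|) < e.
      by apply: (cvgr_lt _ (@dist_cvg0 R eta K) e hlim).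
    apply: filterS (filterI N2 N3) => xi [[hs hr] hd].
    change (phi_minus g eta - e <= lin (sg xi) eta).
    have hxi : disk xi := lt_trans hr hr1.
    have [hA e1] := (Sigma_char _ hM hxi).1 hs.
    have [b1 [b2 b3]] := bnd xi (conj hs hr).
    have [c1 [c2 c3]] := B0.
    have l1 : lin s0 xi <= phi_minus g xi := Aset_le_phi hM hA0 (ltW hxi).
    have id1 : lin (sg xi) eta = lin (sg xi) xi + (eta.1 - xi.1) * (sg xi).1.2 + (eta.2 - xi.2) * (sg xi).2.
      by rewrite /lin; ring.
    have id2 : lin s0 xi = lin s0 eta + (xi.1 - eta.1) * s0.1.2 + (xi.2 - eta.2) * s0.2.
      by rewrite /lin; ring.
    have k1 := mul_le_abs (- (eta.1 - xi.1)) b2.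
    have k2 := mul_le_abs (- (eta.2 - xi.2)) b3.
    have k3 := mul_le_abs (- (xi.1 - eta.1)) c2.
    have k4 := mul_le_abs (- (xi.2 - eta.2)) c3.
    rewrite !normrN in k1 k2 k3 k4.
    rewrite distrC in k1; rewrite [`|eta.2 - xi.2|]distrC in k2.
    move: hd; rewrite /= => hd.
    have eK : 2 * K * (`|xi.1 - eta.1| + `|xi.2 - eta.2|) =
      2 * (`|xi.1 - eta.1| * K) + 2 * (`|xi.2 - eta.2| * K) by ring.
    rewrite eK in hd; rewrite !mulNr in k1 k2 k3 k4.
    lra.
  by rewrite hS.
have [p [_ hp]] := @compact_box R K (sg @ eta) _ FB.
have cl0 : cluster (sg @ eta) s0 by rewrite -(clu p hp).
have nV : nbhs s0 (box (K + 1)).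
  have [c1 [c2 c3]] := B0.
  have m1 := cvgr_lt _ (cvg_norm (@p11_cont R s0)) (K + 1) (ltac:(lra)).
  have m2 := cvgr_lt _ (cvg_norm (@p12_cont R s0)) (K + 1) (ltac:(lra)).
  have m3 := cvgr_lt _ (cvg_norm (@p2_cont R s0)) (K + 1) (ltac:(lra)).
  apply: filterS (filterI m1 (filterI m2 m3)) => s [a1 [a2 a3]].
  by split; [|split]; apply: ltW.
have FV : (sg @ eta) (box (K + 1)).
  by apply: filterS FB => s [a1 [a2 a3]]; split; [|split]; lra.
have cvs : sg @ eta --> s0.
  apply: (@compact_cluster_set1 _ s0 (sg @ eta) (box (K + 1))).
  - exact: norm_hausdorff.
  - exact: compact_box.
  - exact: nV.
  - exact: FV.
  - by apply/seteqP; split => q; [exact: clu | move=> ->].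
rewrite /prop_for /continuous_at /E_minus -/sg.
have -> : sg eta = s0 by rewrite /sg /sigma_minus hS midpt_single.
have -> : (fun xi => dPi xi (mcross (lift1 xi) (sg xi))) =
  (fun xi => (E1p xi.1 xi.2 (sg xi).1.1 (sg xi).1.2 (sg xi).2,
              E2p xi.1 xi.2 (sg xi).1.1 (sg xi).1.2 (sg xi).2)).
  by apply: funext => xi; rewrite EpE.
rewrite EpE.
have [h1 h2] := cvg_Ep (@q1_cont R eta) (@q2_cont R eta)
  (cvg_p11 cvs) (cvg_p12 cvs) (cvg_p2 cvs).
by have := cvg_pair h1 h2; apply.
Qed.

Lemma line_cvg {R : realType} (eta : R * R) (n1 n2 : R) :
  (fun s : R => (eta.1 + s * n1, eta.2 + s * n2)) @ (0 : R) --> eta.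
Proof.
case: eta => e1 e2 /=.
have F0 : Filter (nbhs (0:R)) by apply: nbhs_filter.
have hi : (fun s : R => s) @ (0 : R) --> (0 : R) by apply: cvg_id.
have c1 : (fun _ : R => e1) @ (0 : R) --> e1 by apply: cvg_cst.
have c2 : (fun _ : R => e2) @ (0 : R) --> e2 by apply: cvg_cst.
have h1 : (fun s : R => e1 + s * n1) @ (0 : R) --> e1 + 0 * n1.
  by have := cvgD c1 (@cvgMr_tmp _ _ _ _ _ _ n1 hi); apply.
have h2 : (fun s : R => e2 + s * n2) @ (0 : R) --> e2 + 0 * n2.
  by have := cvgD c2 (@cvgMr_tmp _ _ _ _ _ _ n2 hi); apply.
rewrite mul0r addr0 in h1; rewrite mul0r addr0 in h2.
by have := cvg_pair h1 h2; apply.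
Qed.

Lemma single_of_cont {R : realType} (g : R * R -> R) M eta :
  (forall z, circle z -> `|g z| <= M) -> disk eta ->
  {for eta, continuous (E_minus g)} -> exists s, Sigma_minus g eta = [set s].
Proof.
move=> hM heta hcont.
have F0 : Filter (nbhs (0:R)) by apply: nbhs_filter.
have hx1 : rho eta < 1 := heta.
have hM0 := M_ge0 hM.
have [X [hX hm]] : exists X : (R * R * R) * (R * R * R),
    Sigma_minus g eta = segment X.1 X.2 /\ sigma_minus g eta = v3comb 2^-1 X.1 X.2.
  rewrite /sigma_minus /midpt /=; set X := xget _ _; exists X; split => //.
  apply: (@xgetPex _ _ [set p : (R * R * R) * (R * R * R) | Sigma_minus g eta = segment p.1 p.2]).
  by have [p [q h]] := Sigma_segment hM heta; exists (p, q).
have [eX|neX] := pselect (X.1 = X.2).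
  by exists X.1; rewrite hX eX segment_same.
exfalso.
set a := X.1 in hX hm neX; set b := X.2 in hX hm neX.
have Sa : Sigma_minus g eta a.
  by rewrite hX; exists 0; [rewrite /= lexx ler01 | apply: v3_eq; rewrite /v3comb /=; ring].
have Sb : Sigma_minus g eta b.
  by rewrite hX; exists 1; [rewrite /= lexx ler01 | apply: v3_eq; rewrite /v3comb /=; ring].
have [hAa ea] := (Sigma_char _ hM heta).1 Sa.
have [hAb eb] := (Sigma_char _ hM heta).1 Sb.
set ph0 := phi_minus g eta in ea eb.
set n1 := a.1.2 - b.1.2; set n2 := a.2 - b.2.
set G := fun s : R * R * R => n1 * s.1.2 + n2 * s.2.
set nn := n1 ^+ 2 + n2 ^+ 2.
have hnn : 0 < nn.
  rewrite lt_neqAle; apply/andP; split; last by rewrite /nn; nra.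
  apply/negP => /eqP q0; apply: neX.
  have a1 : n1 = 0 by move: q0; rewrite /nn; nra.
  have a2 : n2 = 0 by move: q0; rewrite /nn; nra.
  apply: v3_eq.
  - have : lin a eta = lin b eta by rewrite ea eb.
    rewrite /lin; move: a1 a2; rewrite /n1 /n2 => a1 a2.
    have -> : a.1.2 = b.1.2 by apply/eqP; rewrite -subr_eq0 a1.
    have -> : a.2 = b.2 by apply/eqP; rewrite -subr_eq0 a2.
    lra.
  - by apply/eqP; rewrite -subr_eq0 -/n1 a1.
  - by apply/eqP; rewrite -subr_eq0 -/n2 a2.
set m := sigma_minus g eta.
have Gam : G a = G m + nn / 2 by rewrite /G /m hm /v3comb /nn /n1 /n2 /=; field.
have lm : lin m eta = ph0 by rewrite /m hm lin_comb ea eb; ring.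
set r1 := (1 + rho eta) / 2.
have hr1 : r1 < 1 by rewrite /r1; lra.
have hr0 : rho eta < r1 by rewrite /r1; lra.
set K := Kb M M r1.
have Ba : box K a.
  by apply: (box_bound hM hAa (ltW hr0) hr1 hM0); rewrite ea; exact: phi_ge hM (ltW hx1).
set Gb := (`|n1| + `|n2|) * K.
have Gbnd : forall s : R * R * R, box K s -> `|G s| <= Gb.
  move=> s [_ [b2 b3]]; rewrite ler_norml; apply/andP; split.
    have k1 := mul_le_abs (- n1) b2; have k2 := mul_le_abs (- n2) b3.
    rewrite !normrN !mulNr in k1 k2; rewrite /G /Gb; lra.
  have k1 := mul_le_abs n1 b2; have k2 := mul_le_abs n2 b3; rewrite /G /Gb; lra.
set xi := fun s : R => ((eta.1 + s * n1, eta.2 + s * n2) : R * R).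
have cxi : xi @ (0 : R) --> eta by exact: line_cvg.
have cE : (fun s => E_minus g (xi s)) @ (0 : R) --> E_minus g eta.
  by have := cvg_comp xi _ cxi hcont.
have cE1 := cvg_q1 (FF := F0) cE; have cE2 := cvg_q2 (FF := F0) cE.
have cx1 := cvg_q1 (FF := F0) cxi; have cx2 := cvg_q2 (FF := F0) cxi.
have cr : (fun s => rho (xi s)) @ (0 : R) --> rho eta.
  by have := cvg_comp xi _ cxi (@rho_cont R eta).
set Hs := fun s : R => n1 * (E_minus g (xi s)).2 - n2 * (E_minus g (xi s)).1
   - ph0 * (n1 * (xi s).1 + n2 * (xi s).2) - (1 - rho (xi s)) * (G m + nn / 2).
set L := n1 * (E_minus g eta).2 - n2 * (E_minus g eta).1
   - ph0 * (n1 * eta.1 + n2 * eta.2) - (1 - rho eta) * (G m + nn / 2).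
have cH : Hs @ (0 : R) --> L.
  have c0 : (fun _ : R => ph0) @ (0 : R) --> ph0 by apply: cvg_cst.
  have c1 : (fun _ : R => (1 : R)) @ (0 : R) --> (1 : R) by apply: cvg_cst.
  have cg : (fun _ : R => G m + nn / 2) @ (0 : R) --> (G m + nn / 2) by apply: cvg_cst.
  by have := cvgB (cvgB (cvgB (@cvgMl_tmp _ _ _ _ _ n1 _ cE2) (@cvgMl_tmp _ _ _ _ _ n2 _ cE1))
    (cvgM c0 (cvgD (@cvgMl_tmp _ _ _ _ _ n1 _ cx1) (@cvgMl_tmp _ _ _ _ _ n2 _ cx2))))
    (cvgM (cvgB c1 cr) cg); apply.
have hL : L = - ((1 - rho eta) * (nn / 2)).
  rewrite /L /E_minus -/m Q_identity lm /rho /G; ring.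
set c := (1 - rho eta) * (nn / 2).
have c0 : 0 < c by rewrite /c; apply: mulr_gt0; [lra | apply: divr_gt0].
have NH : \forall s \near (0 : R), Hs s < - (c / 2).
  by apply: (cvgr_lt L cH); rewrite hL -/c; lra.
set Ls := fun s : R => s * Gb * `|n1 * (xi s).1 + n2 * (xi s).2|.
have cL : Ls @ (0 : R) --> 0 * Gb * `|n1 * eta.1 + n2 * eta.2|.
  have hi : (fun s : R => s) @ (0 : R) --> (0 : R) by apply: cvg_id.
  by have := cvgM (@cvgMr_tmp _ _ _ _ _ _ Gb hi)
    (cvg_norm (cvgD (@cvgMl_tmp _ _ _ _ _ n1 _ cx1) (@cvgMl_tmp _ _ _ _ _ n2 _ cx2))); apply.
have NL : \forall s \near (0 : R), Ls s < c / 2.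
  by apply: (cvgr_lt _ cL); rewrite !mul0r; lra.
have NR : \forall s \near (0 : R), rho (xi s) < r1 by apply: (cvgr_lt _ cr).
have Nall : (0 : R)^'+ (fun s => [/\ 0 < s, Hs s < - (c / 2), Ls s < c / 2 & rho (xi s) < r1]).
  have W : (0 : R)^'+ (fun s => [/\ Hs s < - (c / 2), Ls s < c / 2 & rho (xi s) < r1]).
    apply: (@cvg_within _ (nbhs (0 : R)) _ [set u | 0 < u]).
    apply: filterS (filterI NH (filterI NL NR)) => s [h1 [h2 h3]]; split => //.
  apply: filterS (filterI (nbhs_right_gt 0) W) => s [h0 [h1 h2 h3]]; split => //.
have [s [s0 Hlt Llt rlt]] := filter_ex Nall.
set xs := xi s.
have hxs : disk xs by exact: lt_trans rlt hr1.
have Ss := sig_in hM hxs.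
set sg := sigma_minus g xs in Ss.
have [hAs es] := (Sigma_char _ hM hxs).1 Ss.
have Bs : box K sg.
  by apply: (box_bound hM hAs (ltW rlt) hr1 hM0); rewrite es; exact: phi_ge hM (ltW hxs).
have idl : forall t : R * R * R, lin t xs = lin t eta + s * G t.
  by move=> t; rewrite /xs /xi /G /lin /=; ring.
have m1 : lin sg eta <= ph0 := Aset_le_phi hM hAs (ltW hx1).
have m2 : lin a xs <= phi_minus g xs := Aset_le_phi hM hAa (ltW hxs).
have hGa := Gbnd _ Ba; have hGs := Gbnd _ Bs.
have mono : G a <= G sg.
  have : s * G a <= s * G sg.
    have := idl a; have := idl sg; lra.
  by rewrite ler_pM2l.
set ws := n1 * xs.1 + n2 * xs.2.
have hQ := Q_identity xs sg n1 n2.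
have HsE : Hs s = (1 - rho xs) * (G sg - G a) + (lin sg xs - ph0) * ws.
  rewrite /Hs -/xs /E_minus -/sg hQ -Gam /ws /G; ring.
set D := lin sg xs - ph0 in HsE.
have Dle : `|D| <= s * Gb.
  rewrite ler_norml; apply/andP; split.
    have := idl a; rewrite -/D.
    have : - Gb <= G a by move: hGa; rewrite ler_norml => /andP[].
    rewrite /D es => h1 h2; have : s * (- Gb) <= s * G a by rewrite ler_pM2l.
    lra.
  have := idl sg; have : G sg <= Gb by move: hGs; rewrite ler_norml => /andP[].
  move=> h1 h2; have : s * G sg <= s * Gb by rewrite ler_pM2l.
  rewrite /D; lra.
have t1 : 0 <= (1 - rho xs) * (G sg - G a) by apply: mulr_ge0; lra.
have t2 : - (D * ws) <= `|D| * `|ws|.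
  by rewrite -mulNr; have := mul_le_abs (- D) (lexx `|ws|); rewrite normrN.
have t3 : `|D| * `|ws| <= s * Gb * `|ws| by apply: ler_wpM2r.
move: Llt; rewrite /Ls -/xs -/ws => Llt.
lra.
Qed.

Lemma scal_t {R : realType} (P Q t1 t2 u1 u2 : R) :
  P != Q -> 0 <= t1 <= 1 -> 0 <= t2 <= 1 -> 0 <= u1 <= 1 -> 0 <= u2 <= 1 ->
  P = (1 - u1) * ((1 - t1) * P + t1 * Q) + u1 * ((1 - t2) * P + t2 * Q) ->
  Q = (1 - u2) * ((1 - t1) * P + t1 * Q) + u2 * ((1 - t2) * P + t2 * Q) ->
  t1 + t2 = 1.
Proof.
move=> hPQ /andP[t10 t11] /andP[t20 t21] /andP[u10 u11] /andP[u20 u21] h1 h2.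
have dQ : Q - P != 0 by rewrite subr_eq0 eq_sym.
have k1 : ((1 - u1) * t1 + u1 * t2) * (Q - P) = 0 by move: h1 => /eqP; rewrite -subr_eq0 => /eqP h; rewrite -[RHS]oppr0 -h; ring.
have k2 : ((1 - u2) * t1 + u2 * t2 - 1) * (Q - P) = 0 by move: h2 => /eqP; rewrite -subr_eq0 => /eqP h; rewrite -[RHS]oppr0 -h; ring.
move/eqP: k1; rewrite mulf_eq0 (negPf dQ) orbF => /eqP k1.
move/eqP: k2; rewrite mulf_eq0 (negPf dQ) orbF => /eqP k2.
have a1 : (1 - u1) * t1 = 0 by apply/eqP; rewrite eq_le; apply/andP; split; nra.
have a2 : u1 * t2 = 0 by apply/eqP; rewrite eq_le; apply/andP; split; nra.
have b1 : (1 - u2) * (1 - t1) = 0 by apply/eqP; rewrite eq_le; apply/andP; split; nra.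
have b2 : u2 * (1 - t2) = 0 by apply/eqP; rewrite eq_le; apply/andP; split; nra.
have [u1e|u1n] := eqVneq u1 0.
  rewrite u1e subr0 mul1r in a1.
  rewrite a1 subr0 mulr1 in b1; have u2e : u2 = 1 by lra.
  rewrite u2e mul1r in b2; lra.
have [u1e'|u1n'] := eqVneq u1 1.
  rewrite u1e' mul1r in a2.
  rewrite a2 subr0 mulr1 in b2; rewrite b2 subr0 mul1r in b1; lra.
move/eqP: a1; rewrite mulf_eq0 subr_eq0 eq_sym (negPf u1n') /= => /eqP a1.
move/eqP: a2; rewrite mulf_eq0 (negPf u1n) /= => /eqP a2.
rewrite a1 a2 in k2; lra.
Qed.

Lemma in_seg {R : realType} (p q s : R * R * R) :
  segment p q s -> exists2 t, 0 <= t <= 1 & s = v3comb t p q.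
Proof. by case=> t ht <-; exists t. Qed.

Lemma seg_ends {R : realType} (p q : R * R * R) : segment p q p /\ segment p q q.
Proof.
split; [exists 0 | exists 1]; rewrite /= ?lexx ?ler01 //;
  by apply: v3_eq; rewrite /v3comb /=; ring.
Qed.

Lemma seg_mid_unique {R : realType} (p q p' q' : R * R * R) :
  segment p q = segment p' q' -> v3comb 2^-1 p q = v3comb 2^-1 p' q'.
Proof.
move=> hS.
have [sp sq] := seg_ends p q; have [sp' sq'] := seg_ends p' q'.
have [t1 ht1 e1] : exists2 t, 0 <= t <= 1 & p' = v3comb t p q by apply: in_seg; rewrite hS.
have [t2 ht2 e2] : exists2 t, 0 <= t <= 1 & q' = v3comb t p q by apply: in_seg; rewrite hS.
have [u1 hu1 f1] : exists2 t, 0 <= t <= 1 & p = v3comb t p' q' by apply: in_seg; rewrite -hS.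
have [u2 hu2 f2] : exists2 t, 0 <= t <= 1 & q = v3comb t p' q' by apply: in_seg; rewrite -hS.
have [epq|npq] := pselect (p = q).
  move: sp' sq'; rewrite -hS -epq segment_same /= => -> ->.
  by [].
have hsum : t1 + t2 = 1.
  have coord : forall (f : R * R * R -> R),
      (forall a b t, f (v3comb t a b) = (1 - t) * f a + t * f b) -> f p != f q -> t1 + t2 = 1.
    move=> f hf hne; apply: (scal_t hne ht1 ht2 hu1 hu2).
      by rewrite {1}f1 hf e1 e2 !hf.
    by rewrite {1}f2 hf e1 e2 !hf.
  have [h|h] := eqVneq p.1.1 q.1.1; last by apply: (coord (fun s => s.1.1)).
  have [h'|h'] := eqVneq p.1.2 q.1.2; last by apply: (coord (fun s => s.1.2)).
  have [h''|h''] := eqVneq p.2 q.2; last by apply: (coord (fun s => s.2)).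
  by exfalso; apply: npq; apply: v3_eq.
have t2e : t2 = 1 - t1 by lra.
by rewrite e1 e2 t2e; apply: v3_eq; rewrite /v3comb /=; field.
Qed.

Definition neg3 {R : realType} (s : R * R * R) : R * R * R := (- s.1.1, - s.1.2, - s.2).

Lemma neg3K {R : realType} (s : R * R * R) : neg3 (neg3 s) = s.
Proof. by apply: v3_eq; rewrite /neg3 /= opprK. Qed.

Lemma neg3_comb {R : realType} t (p q : R * R * R) : neg3 (v3comb t p q) = v3comb t (neg3 p) (neg3 q).
Proof. apply: v3_eq; rewrite /neg3 /v3comb /=; ring. Qed.

Lemma neg3_seg {R : realType} (p q : R * R * R) :
  [set s | segment p q (neg3 s)] = segment (neg3 p) (neg3 q).
Proof.
apply/seteqP; split => s /=.
  case=> t ht e; exists t => //; by rewrite -neg3_comb e neg3K.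
case=> t ht <-; exists t => //; by rewrite neg3_comb !neg3K.
Qed.

Lemma midpt_seg {R : realType} (S : set (R * R * R)) p q :
  S = segment p q -> midpt S = v3comb 2^-1 p q.
Proof.
move=> hS; rewrite /midpt /=; set X := xget _ _.
have hX : S = segment X.1 X.2.
  by apply: (@xgetPex _ _ [set p : (R * R * R) * (R * R * R) | S = segment p.1 p.2]); exists (p, q).
by apply: seg_mid_unique; rewrite -hX.
Qed.

Lemma midpt_neg {R : realType} (S : set (R * R * R)) :
  midpt [set s | S (neg3 s)] = neg3 (midpt S).
Proof.
have [[p [q hS]]|nS] := pselect (exists p q, S = segment p q).
  rewrite (midpt_seg hS) (@midpt_seg _ _ (neg3 p) (neg3 q)); first by rewrite neg3_comb.
  by rewrite hS neg3_seg.
have nS' : ~ exists p q, [set s | S (neg3 s)] = segment p q.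
  move=> [p [q h]]; apply: nS; exists (neg3 p), (neg3 q).
  rewrite -neg3_seg -h; apply/seteqP; split => s /=; by rewrite neg3K.
rewrite /midpt /= !xgetPN.
- by apply: v3_eq; rewrite /neg3 /v3comb /=; rewrite !mulr0 !addr0 oppr0.
- by move=> [p q] /= h; apply: nS; exists p, q.
- by move=> [p q] /= h; apply: nS'; exists p, q.
Qed.

Lemma phi_plusE {R : realType} (g : R * R -> R) x :
  phi_plus g x = - phi_minus (fun z => - g z) x.
Proof.
rewrite /phi_plus /inf /phi_minus; congr (- sup _); apply/seteqP; split.
- move=> _ [_ [a [[c [b1 [b2 ->]]] Ha] <-] <-].
  exists (fun xi => - c + - b1 * xi.1 + - b2 * xi.2).
    split; first by exists (- c), (- b1), (- b2).
    move=> z cz; have := Ha z cz; lra.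
  rewrite /=; ring.
- move=> _ [a [[c [b1 [b2 ->]]] Ha] <-].
  exists (- c + - b1 * x.1 + - b2 * x.2); last by ring.
  exists (fun xi => - c + - b1 * xi.1 + - b2 * xi.2) => //.
  split; first by exists (- c), (- b1), (- b2).
  move=> z cz; have := Ha z cz; lra.
Qed.

Lemma lin_neg3 {R : realType} (s : R * R * R) x : lin (neg3 s) x = - lin s x.
Proof. rewrite /lin /neg3 /=; ring. Qed.

Lemma Sigma_plusE {R : realType} (g : R * R -> R) x :
  Sigma_plus g x = [set s | Sigma_minus (fun z => - g z) x (neg3 s)].
Proof.
apply/seteqP; split => s /=; rewrite /Sigma_plus /Sigma_minus /=.
- move=> [H1 H2]; split.
    move=> xi hxi; have := H1 xi hxi; rewrite !minkE lin_neg3 phi_plusE; lra.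
  by rewrite minkE lin_neg3; move: H2; rewrite minkE phi_plusE => ->; rewrite opprK.
- move=> [H1 H2]; split.
    move=> xi hxi; have := H1 xi hxi; rewrite !minkE lin_neg3 phi_plusE; lra.
  rewrite minkE phi_plusE; move: H2; rewrite minkE lin_neg3 => <-; by rewrite opprK.
Qed.

Lemma E_plusE {R : realType} (g : R * R -> R) xi :
  E_plus g xi = (- (E_minus (fun z => - g z) xi).1, - (E_minus (fun z => - g z) xi).2).
Proof.
rewrite /E_plus /sigma_plus Sigma_plusE midpt_neg /E_minus /sigma_minus.
by rewrite /dPi /mcross /lift1 /neg3 /=; congr pair; ring.
Qed.

Lemma negp_cont {R : realType} (f : R * R -> R * R) eta :
  {for eta, continuous f} ->
  {for eta, continuous (fun x => (- (f x).1, - (f x).2))}.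
Proof.
rewrite /prop_for /continuous_at => h.
have F0 : Filter (nbhs eta) by apply: nbhs_filter.
have h1 : (fun x => - (f x).1) @ eta --> - (f eta).1.
  by have := cvgN (cvg_q1 (FF := F0) h); apply.
have h2 : (fun x => - (f x).2) @ eta --> - (f eta).2.
  by have := cvgN (cvg_q2 (FF := F0) h); apply.
by have := cvg_pair h1 h2; apply.
Qed.

Lemma minus_iff {R : realType} (g : R * R -> R) M eta :
  (forall z, circle z -> `|g z| <= M) -> disk eta ->
  {for eta, continuous (E_minus g)} <-> exists s, Sigma_minus g eta = [set s].
Proof.
move=> hM heta; split; first exact: single_of_cont hM heta.
by case=> s hs; exact: cont_of_single hM heta hs.
Qed.

Lemma plus_iff {R : realType} (g : R * R -> R) M eta :
  (forall z, circle z -> `|g z| <= M) -> disk eta ->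
  {for eta, continuous (E_plus g)} <-> exists s, Sigma_plus g eta = [set s].
Proof.
move=> hM heta.
have hM' : forall z, circle z -> `|(fun z => - g z) z| <= M by move=> z cz; rewrite normrN; exact: hM.
have eqE : E_plus g = (fun x => (- (E_minus (fun z => - g z) x).1, - (E_minus (fun z => - g z) x).2)).
  by apply: funext => x; rewrite E_plusE.
have eqE' : E_minus (fun z => - g z) = (fun x => (- (E_plus g x).1, - (E_plus g x).2)).
  apply: funext => x; rewrite (E_plusE g x).
  by case: (E_minus (fun z => - g z) x) => a b /=; rewrite !opprK.
split.
- move=> hc; have hc' : {for eta, continuous (E_minus (fun z => - g z))}.
    by rewrite eqE'; exact: negp_cont.
  have [s hs] := (minus_iff hM' heta).1 hc'.
  exists (neg3 s); rewrite Sigma_plusE hs; apply/seteqP; split => t /=.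
    by move=> <-; rewrite neg3K.
  by move=> ->; rewrite neg3K.
- case=> s hs.
  have hs' : Sigma_minus (fun z => - g z) eta = [set neg3 s].
    apply/seteqP; split => t ht.
      have : Sigma_plus g eta (neg3 t) by rewrite Sigma_plusE /= neg3K.
      by rewrite hs /= => <-; rewrite neg3K.
    have : Sigma_plus g eta s by rewrite hs.
    by rewrite Sigma_plusE /= ht.
  rewrite eqE; apply: negp_cont; exact: (minus_iff hM' heta).2 (ex_intro _ _ hs').
Qed.

Lemma circle_compact {R : realType} : compact (@circle R).
Proof.
apply: (subclosed_compact _ (compact_setX (@segment_compact R (-1) 1) (@segment_compact R (-1) 1))).
  have -> : @circle R = rho @^-1` [set (1 : R)] by apply/seteqP; split.
  apply: closed_comp; last exact: closed_eq.
  by move=> x _; exact: rho_cont.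
move=> z; rewrite /circle /= !in_itv /= => cz.
have h1 : -1 <= z.1 <= 1 by apply/andP; split; nra.
have h2 : -1 <= z.2 <= 1 by apply/andP; split; nra.
by rewrite h1 h2.
Qed.

Lemma circle_abs {R : realType} (z : R * R) : circle z -> `|z.1| <= 1 /\ `|z.2| <= 1.
Proof.
rewrite /circle /= => cz.
have s1 := sqr_ge0 z.1; have s2 := sqr_ge0 z.2.
have a1 : `|z.1| ^+ 2 <= 1 by rewrite real_normK ?num_real; lra.
have a2 : `|z.2| ^+ 2 <= 1 by rewrite real_normK ?num_real; lra.
have n1 := normr_ge0 z.1; have n2 := normr_ge0 z.2.
by split; nra.
Qed.

Lemma phi_bound {R : realType} (X : R * R -> R * R) (phi : R * R -> R) :
  {within @circle R, continuous X} -> is_support_function X phi ->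
  exists M, forall z, circle z -> `|phi z| <= M.
Proof.
move=> hX hphi.
have cK := continuous_compact hX circle_compact.
have := compact_bounded cK; rewrite /bounded_near => -[B [_ hB]].
have hB1 := hB (B + 1) (ltr_pwDr ltr01 (lexx B)).
exists (2 * (B + 1)) => z cz.
have hz : `|X z| <= B + 1 by apply: hB1; exists z.
have hz' : Num.max `|(X z).1| `|(X z).2| <= B + 1 by [].
move: hz'; rewrite ge_max => /andP[x1 x2].
have ep : phi z = z.1 * (X z).2 - z.2 * (X z).1.
  rewrite (hphi z cz) /=.
  have -> : z.1 * (z.1 * phi z) - z.2 * (- z.2 * phi z) = (z.1 ^+ 2 + z.2 ^+ 2) * phi z by ring.
  by move: cz; rewrite /circle => ->; rewrite mul1r.
have [z1 z2] := circle_abs cz.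
rewrite ep; apply: le_trans (ler_normB _ _) _.
rewrite !normrM.
have a1 : `|z.1| * `|(X z).2| <= 1 * (B + 1) by apply: ler_pM => //.
have a2 : `|z.2| * `|(X z).1| <= 1 * (B + 1) by apply: ler_pM => //.
lra.
Qed.

Theorem lemma4p11 (R : realType) (X : (R * R) -> (R * R)) (phi : (R * R) -> R)
  (hX : {within @circle R, continuous X})
  (hphi : is_support_function X phi)
  (eta : (R * R)) (heta : disk eta) :
  ({for eta, continuous (@E_minus R phi)} <-> exists s, Sigma_minus phi eta = [set s])
  /\
  ({for eta, continuous (@E_plus R phi)} <-> exists s, Sigma_plus phi eta = [set s]).
Proof.
have [M hM] := phi_bound hX hphi.
by split; [exact: minus_iff hM heta | exact: plus_iff hM heta].
Qed.
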